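(* For every $n$ there exists a binary matrix $M \in \{0,1\}^{n \times n}$ with twin-width at most $3$ whose row-Hamming-coherence and column-Hamming-coherence satisfy $\mathscr{H}^r(M), \mathscr{H}^c(M) \in \Omega(n \log n)$.
   Context: The Hamming distance of $u,v\in\{0,1\}^n$ is $d(u,v)=\sum_{i=1}^n|u_i-v_i|$. Let $r^{(1)},\dots,r^{(n)}$ be the rows of $M$. For a permutation $\pi$ of $[n]$, the row-Hamming-sum is $\mathscr{H}^r_\pi(M)=\sum_{i=1}^{n-1} d(r^{(\pi(i))},r^{(\pi(i+1))})$, and the row-Hamming-coherence is $\mathscr{H}^r(M)=\min_\pi \mathscr{H}^r_\pi(M)$. The column-Hamming-coherence $\mathscr{H}^c(M)$ is defined analogously using the columns. Twin-width. A division of an $n\times n$ matrix $M$ is a pair $(\mathcal{R},\mathscr{C})$ of partitions of $[n]$ into contiguous non-empty intervals; the cell $(i,j)$ is the submatrix with rows in the $i$-th interval of $\mathcal{R}$ and columns in the $j$-th interval of $\mathscr{C}$; a cell is constant if all its entries are equal. A row (resp. column) of the division is the set of cells sharing a given interval of $\mathcal{R}$ (resp. $\mathscr{C}$). A merge sequence is a sequence of divisions $(\mathcal{R}_{2n-1},\mathscr{C}_{2n-1}),\dots,(\mathcal{R}_1,\mathscr{C}_1)$ starting from the singleton partitions, ending with $\mathcal{R}_1=\mathscr{C}_1=\{[n]\}$, each obtained from the previous by merging two adjacent intervals of either the row or the column partition. It is $d$-wide if in every division every row and every column contains at most $d$ non-constant cells. $M$ is $d$-twin-ordered if it admits a $d$-wide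 merge sequence; the twin-width of $M$ is the least $d$ such that some permutation of the rows and of the columns of $M$ is $d$-twin-ordered. *)

(* Defs.v *)
From mathcomp Require Import all_boot all_order all_algebra all_fingroup.
Set Implicit Arguments. Unset Strict Implicit. Unset Printing Implicit Defensive.

Definition row_dist n (M : 'M[bool]_n) (i i' : 'I_n) : nat :=
  \sum_(j : 'I_n) (M i j != M i' j).

Definition row_hamming_sum n (M : 'M[bool]_n) (p : 'S_n) : nat :=
  \sum_(i : 'I_n) \sum_(j : 'I_n | (j : nat) == i.+1) row_dist M (p i) (p j).

Definition row_coherence n (M : 'M[bool]_n) : nat :=
  row_hamming_sum M [arg min_(p < (1%g : 'S_n)) row_hamming_sum M p].

Definition col_coherence n (M : 'M[bool]_n) : nat := row_coherence M^T.

(* A partition of [n] into contiguous nonempty intervals is encoded by its set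
   of cut points C : positions k > 0 at which a new interval starts.
   i and j lie in the same interval iff no cut point k with min(i,j) < k <= max(i,j). *)
Definition same_part n (C : {set 'I_n}) (i j : 'I_n) : bool :=
  [forall k : 'I_n, ((minn i j < k) && (k <= maxn i j)) ==> (k \notin C)].

Definition part_start n (C : {set 'I_n}) (j : 'I_n) : bool :=
  ((j : nat) == 0) || (j \in C).

Definition nonconst_cell n (M : 'M[bool]_n) (R C : {set 'I_n}) (i j : 'I_n) : bool :=
  [exists i1, exists i2, exists j1, exists j2,
     [&& same_part R i i1, same_part R i i2, same_part C j j1, same_part C j j2
       & M i1 j1 != M i2 j2]].

(* Every row and every column of the division contains at most d non-constant cells
   (cells of a row are counted once each, via the first index of their column interval). *)
Definition d_wide_division n (M : 'M[bool]_n) (d : nat) (D : {set 'I_n} * {set 'I_n}) : bool :=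
  [forall i, #|[set j | part_start D.2 j && nonconst_cell M D.1 D.2 i j]| <= d] &&
  [forall j, #|[set i | part_start D.1 i && nonconst_cell M D.1 D.2 i j]| <= d].

Definition all_cuts n : {set 'I_n} := [set k : 'I_n | 0 < k].

(* Merging two adjacent intervals = removing one cut point, in the row or in the
   column partition. *)
Definition merge_step n (D D' : {set 'I_n} * {set 'I_n}) : Prop :=
  exists k : 'I_n, 0 < k /\
    ((k \in D.1 /\ D' = (D.1 :\ k, D.2)) \/ (k \in D.2 /\ D' = (D.1, D.2 :\ k))).

(* A merge sequence: divisions s 0, ..., s (2n-2) (the paper's
   (R_{2n-1},C_{2n-1}), ..., (R_1,C_1)), from singletons to the trivial division. *)
Definition merge_sequence n (s : nat -> {set 'I_n} * {set 'I_n}) : Prop :=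
  s 0 = (all_cuts n, all_cuts n) /\
  s (2 * n - 2) = (set0, set0) /\
  forall t, t < 2 * n - 2 -> merge_step (s t) (s t.+1).

Definition twin_ordered n (M : 'M[bool]_n) (d : nat) : Prop :=
  exists s, merge_sequence s /\ forall t, t <= 2 * n - 2 -> d_wide_division M d (s t).

Definition twin_width_le n (M : 'M[bool]_n) (d : nat) : Prop :=
  exists (sr sc : 'S_n), twin_ordered (\matrix_(i, j) M (sr i) (sc j)) d.

(* Main.v *)
Require Import Defs.
From mathcomp Require Import all_boot all_order all_algebra all_fingroup.
From mathcomp Require Import zify.
Set Implicit Arguments. Unset Strict Implicit. Unset Printing Implicit Defensive.

Lemma div_mono x y s t : s <= t -> x %/ 2 ^ s = y %/ 2 ^ s -> x %/ 2 ^ t = y %/ 2 ^ t.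
Proof.
move=> st e; rewrite -(subnKC st) expnD !divnMA e //.
Qed.

Definition lam b x y := \sum_(s < b) (x %/ 2 ^ s != y %/ 2 ^ s).

Lemma sum_lt b k : \sum_(s < b) (s < k) = minn b k.
Proof.
elim: b => [|b IH]; first by rewrite big_ord0 min0n.
rewrite big_ord_recr /= IH; case: (ltnP b k) => h; lia.
Qed.

Lemma lam_eq b x y k : k <= b -> x %/ 2 ^ k = y %/ 2 ^ k ->
  (forall s, s < k -> x %/ 2 ^ s != y %/ 2 ^ s) -> lam b x y = k.
Proof.
move=> kb ek lt; rewrite /lam.
rewrite (eq_bigr (fun s : 'I_b => nat_of_bool (s < k))).
  by rewrite sum_lt; lia.
move=> s _; case: (ltnP s k) => h; first by rewrite lt.
by rewrite (div_mono h ek) eqxx.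
Qed.

Lemma lam_exists b x y : x < b -> y < b -> exists2 k, k <= b &
  x %/ 2 ^ k = y %/ 2 ^ k /\ (forall s, s < k -> x %/ 2 ^ s != y %/ 2 ^ s).
Proof.
move=> xb yb.
have hb : x %/ 2 ^ b == y %/ 2 ^ b.
  rewrite !divn_small //; apply: leq_trans (ltnW (ltn_expl b (isT : 1 < 2))); done.
have ex : exists k, x %/ 2 ^ k == y %/ 2 ^ k by exists b.
case: (ex_minnP ex) => k /eqP ek mk; exists k; first exact: mk.
split=> // s sk; apply/negP => /mk; rewrite leqNgt sk //.
Qed.

Lemma lam_const b t i i1 j j1 : i1 %/ 2 ^ t = i %/ 2 ^ t -> j1 %/ 2 ^ t = j %/ 2 ^ t ->
  i %/ 2 ^ t != j %/ 2 ^ t -> lam b i1 j1 = lam b i j.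
Proof.
move=> ei ej ne; apply: eq_bigr => s _.
case: (leqP t s) => h.
  have -> : i1 %/ 2 ^ s = i %/ 2 ^ s.
    by rewrite -(subnKC h) expnD !divnMA ei.
  have -> : j1 %/ 2 ^ s = j %/ 2 ^ s.
    by rewrite -(subnKC h) expnD !divnMA ej.
  done.
have H : forall a c, a %/ 2 ^ t != c %/ 2 ^ t -> a %/ 2 ^ s != c %/ 2 ^ s.
  by move=> a c nac; apply/negP => /eqP e; move/eqP: nac; apply; apply: div_mono e; exact: ltnW.
rewrite !H //; by rewrite ei ej.
Qed.


Definition Mx n : 'M[bool]_n := \matrix_(i < n, j < n) odd (lam n i j).

Lemma row_dist_sym n (M : 'M[bool]_n) a b : row_dist M a b = row_dist M b a.
Proof. by apply: eq_bigr => j _; rewrite eq_sym. Qed.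

Lemma dist_lb n (a b : 'I_n) k : k <= n -> a %/ 2 ^ k = b %/ 2 ^ k ->
  (forall s, s < k -> a %/ 2 ^ s != b %/ 2 ^ s) -> 2 ^ k %/ 4 <= row_dist (Mx n) a b.
Proof.
case: k => [|[|L']] //= kn ek lk.
have ab : val a != val b by have := lk 0 isT; rewrite !expn0 !divn1.
wlog lt_ab : a b ek lk ab / a < b.
  move=> W; case: (ltngtP a b) => h; first exact: W.
  - rewrite row_dist_sym; apply: W => //.
    + by move=> s /lk; rewrite eq_sym.
    + by rewrite eq_sym.
  - by move/eqP: ab => []; exact: h.
set L := L'.+1. set d := 2 ^ L'.
have d0 : 0 < d by rewrite expn_gt0.
have e2L : 2 ^ L = d * 2 by rewrite /L expnSr.
set A := a %/ 2 ^ L. set B := b %/ 2 ^ L.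
have nAB : A != B by apply: lk.
have lAB : A <= B by apply: leq_div2r; exact: ltnW.
have hAB : A %/ 2 = B %/ 2 by rewrite /A /B -!divnMA -expnSr.
set al := a %/ d.
have alA : al %/ 2 = A by rewrite /al /A -divnMA e2L.
set w := al %/ 2 * 2 + (1 - al %% 2).
have w2 : w %/ 2 = A by rewrite -alA /w; lia.
have wal : w != al by rewrite /w; lia.
have cnt : forall j : 'I_n, j %/ d == w -> (Mx n a j != Mx n b j).
  move=> j /eqP jw.
  have jA : j %/ 2 ^ L = A by rewrite e2L divnMA jw.
  have la : lam n a j = L.
    apply: lam_eq; [exact: ltnW | by rewrite jA |].
    move=> s sL; apply/negP => /eqP e.
    have := div_mono (_ : s <= L') e; rewrite -/d jw -/al => /(_ _)/eqP.
    move=> H; move: wal; rewrite eq_sym H ?eqxx //; rewrite -ltnS.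
  have lb : lam n b j = L.+1.
    apply: lam_eq => //.
      by rewrite (expnSr 2 L) !divnMA -/B jA hAB.
    move=> s sL; apply/negP => /eqP e.
    have := div_mono (_ : s <= L) e; rewrite -/B jA => /(_ _) h.
    by move/eqP: nAB; apply; rewrite h.
  by rewrite !mxE la lb /=; case: (odd L').
have -> : 2 ^ L'.+2 %/ 4 = d by rewrite !expnSr -mulnA mulnK.
rewrite /row_dist (bigID (fun j : 'I_n => j %/ d == w)) /=.
apply: leq_trans (leq_addr _ _).
rewrite (eq_bigr (fun _ => 1)); last by move=> j /cnt /negbTE ->.
rewrite sum1_card.
pose f := fun r : 'I_d => (insubd a (w * d + r) : 'I_n).
have fv : forall r : 'I_d, val (f r) = w * d + r.
  move=> r; rewrite /f val_insubd.
  case: ifP => // /negbT; rewrite -leqNgt => h; exfalso.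
  have : b <= w * d + r by apply: leq_trans h; exact: ltnW.
  move=> /(leq_div2r (2 ^ L)); rewrite -/B e2L divnMA divnMDl // (divn_small (ltn_ord r)) addn0 w2.
  by move=> h2; move: nAB; rewrite eqn_leq lAB h2.
have finj : injective f by move=> r1 r2 /(congr1 val); rewrite !fv => /addnI/val_inj.
rewrite -[X in X <= _](card_ord d) -cardsT -(card_imset _ finj).
apply: subset_leq_card; apply/subsetP => j /imsetP [r _ ->].
rewrite unfold_in /= fv divnMDl // (divn_small (ltn_ord r)) addn0; exact: eqxx.
Qed.


Lemma sum_up b k : \sum_(l < b) (2 ^ l %/ 4) * (l < k) <= 2 ^ (minn b k) %/ 4.
Proof.
elim: b => [|b IH]; first by rewrite big_ord0.
rewrite big_ord_recr /=; case: (ltnP b k) => h.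
  have -> : minn b.+1 k = (minn b k).+1 by lia.
  rewrite muln1; apply: leq_trans (leq_add IH (leqnn _)) _.
  have -> : minn b k = b by lia.
  rewrite expnS; set X := 2 ^ b; lia.
have -> : minn b.+1 k = minn b k by lia.
by rewrite muln0 addn0.
Qed.

Definition W n (a b : nat) := \sum_(l < n) (2 ^ l %/ 4) * (a %/ 2 ^ l != b %/ 2 ^ l).

Lemma W_le n (a b : 'I_n) : W n a b <= row_dist (Mx n) a b.
Proof.
have [k kn [ek lk]] := lam_exists (ltn_ord a) (ltn_ord b).
apply: leq_trans (dist_lb kn ek lk).
rewrite /W (eq_bigr (fun l : 'I_n => (2 ^ l %/ 4) * (l < k))).
  by apply: leq_trans (sum_up n k) _; rewrite (minn_idPr kn).
move=> l _; congr (_ * _); case: (ltnP l k) => h; first by rewrite lk.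
by rewrite (div_mono h ek) eqxx.
Qed.

Lemma sum_succ n' (H : 'I_n'.+1 -> 'I_n'.+1 -> nat) :
  \sum_(i : 'I_n'.+1) \sum_(j : 'I_n'.+1 | val j == (val i).+1) H i j =
  \sum_(k < n') H (inord k) (inord k.+1).
Proof.
rewrite big_ord_recr /= [X in _ + X]big_pred0; last first.
  by move=> j /=; rewrite ltn_eqF.
rewrite addn0; apply: eq_bigr => i _.
have -> : widen_ord (leqnSn n') i = inord i.
  by apply: val_inj; rewrite /= inordK // ltnW // ltnS.
apply: (big_pred1 (inord i.+1)) => j /=.
by rewrite -val_eqE /= inordK // ltnS.
Qed.

Lemma iotaS_map a m : iota a.+1 m = map S (iota a m).
Proof. by elim: m a => //= m IH a; rewrite IH. Qed.

Lemma changes m (f : nat -> nat) :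
  size (undup [seq f k | k <- iota 0 m.+1]) <= \sum_(k < m) (f k != f k.+1) + 1.
Proof.
elim: m f => [|m IH] f; first by rewrite big_ord0.
have -> : iota 0 m.+2 = 0 :: map succn (iota 0 m.+1) by rewrite -iotaS_map.
rewrite map_cons -map_comp big_ord_recl.
set s := map _ (iota 0 m.+1).
have IH' := IH (f \o succn); rewrite -/s in IH'.
have -> : \sum_(i < m) (f (lift ord0 i) != f (lift ord0 i).+1) =
          \sum_(k < m) ((f \o succn) k != (f \o succn) k.+1).
  by apply: eq_bigr => i _; rewrite /= /bump add1n.
have -> : undup (f 0 :: s) = if f 0 \in s then undup s else f 0 :: undup s by [].
case: ifP => hin.
  by apply: leq_trans IH' _; rewrite -addnA leq_addl.
have -> : (f (@ord0 m) != f (@ord0 m).+1) = true.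
  apply/negP => /eqP e; move: hin; rewrite /= e /s /= in_cons eqxx //.
have -> : size (f 0 :: undup s) = (size (undup s)).+1 by [].
move: IH'; set S := \sum_(k < m) _; set U := size (undup s); lia.
Qed.

Lemma crossing n' (p : 'S_n'.+1) l :
  n' %/ 2 ^ l <= \sum_(k < n') (val (p (inord k)) %/ 2 ^ l != val (p (inord k.+1)) %/ 2 ^ l).
Proof.
set f := fun k => val (p (inord k)) %/ 2 ^ l.
have := changes n' f; rewrite -/f => h.
rewrite -(leq_add2r 1); apply: leq_trans _ h.
have -> : (n' %/ 2 ^ l) + 1 = size (iota 0 (n' %/ 2 ^ l).+1) by rewrite size_iota addn1.
apply: uniq_leq_size; first exact: iota_uniq.
move=> b; rewrite mem_iota add0n ltnS mem_undup => hb.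
have x_lt : b * 2 ^ l < n'.+1 by rewrite ltnS -leq_divRL // expn_gt0.
set X := Ordinal x_lt.
apply/mapP; exists (val ((p^-1)%g X)); first by rewrite mem_iota /= ltn_ord.
by rewrite /f inord_val permKV /= mulnK // expn_gt0.
Qed.

Lemma path_lb n' (p : 'S_n'.+1) :
  \sum_(l < n'.+1) (2 ^ l %/ 4) * (n' %/ 2 ^ l) <= row_hamming_sum (Mx n'.+1) p.
Proof.
rewrite /row_hamming_sum.
apply: (@leq_trans (\sum_(i : 'I_n'.+1) \sum_(j : 'I_n'.+1 | val j == (val i).+1)
   W n'.+1 (p i) (p j))).
  rewrite (sum_succ (fun i j => W n'.+1 (p i) (p j))) /W exchange_big /=.
  apply: leq_sum => l _; rewrite -big_distrr /=; apply: leq_mul => //.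
  exact: crossing.
by apply: leq_sum => i _; apply: leq_sum => j _; exact: W_le.
Qed.


Definition Dh n h : {set 'I_n} := [set k : 'I_n | (0 < k) && (2 ^ h %| k)].

Lemma same_part_div n (C : {set 'I_n}) t (i j : 'I_n) :
  Dh n t \subset C -> same_part C i j -> i %/ 2 ^ t = j %/ 2 ^ t.
Proof.
move=> sub /forallP sp.
wlog le_ij : i j sp / i <= j.
  move=> W; case: (leqP i j) => h; first exact: W.
  symmetry; apply: W; last exact: ltnW.
  by move=> k; rewrite minnC maxnC; exact: sp.
apply/eqP; apply: contraT => ne.
have p0 : 0 < 2 ^ t by rewrite expn_gt0.
have lt : i %/ 2 ^ t < j %/ 2 ^ t by rewrite ltn_neqAle ne leq_div2r.
have hkj : j %/ 2 ^ t * 2 ^ t <= j by exact: leq_trunc_div.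
have hk : j %/ 2 ^ t * 2 ^ t < n by exact: leq_ltn_trans hkj (ltn_ord j).
have ik : i < j %/ 2 ^ t * 2 ^ t.
  apply: leq_trans (ltn_ceil i p0) _; rewrite leq_mul2r lt orbT //.
have KC : Ordinal hk \in C.
  apply: (subsetP sub); rewrite inE /=; apply/andP; split.
    exact: leq_ltn_trans (leq0n i) ik.
  exact: dvdn_mull.
have := sp (Ordinal hk); rewrite /= (minn_idPl le_ij) (maxn_idPr le_ij) ik hkj /=.
by rewrite KC.
Qed.

Lemma nonconst_div n h (R C : {set 'I_n}) (i j : 'I_n) :
  Dh n h.+1 \subset R -> Dh n h.+1 \subset C -> nonconst_cell (Mx n) R C i j ->
  i %/ 2 ^ h.+1 = j %/ 2 ^ h.+1.
Proof.
move=> sR sC /existsP [i1 /existsP [i2 /existsP [j1 /existsP [j2 /and5P [p1 p2 p3 p4 ne]]]]].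
apply/eqP; apply: contraT => nij; move: ne.
rewrite !mxE.
rewrite (@lam_const n h.+1 i i1 j j1) //; last first.
  - by symmetry; apply: same_part_div p3.
  - by symmetry; apply: same_part_div p1.
rewrite (@lam_const n h.+1 i i2 j j2) ?eqxx //.
  - by symmetry; apply: same_part_div p2.
  - by symmetry; apply: same_part_div p4.
Qed.

Lemma card_val_le n (s : seq nat) : #|[set x : 'I_n | val x \in s]| <= size s.
Proof.
rewrite cardE -(size_map val); apply: (@leq_trans (size (undup s))); last exact: size_undup.
apply: uniq_leq_size; first by rewrite map_inj_uniq ?enum_uniq //; exact: val_inj.
by move=> x /mapP [y]; rewrite mem_enum inE mem_undup => yi ->.
Qed.

Lemma card_le2 n h (X : {set 'I_n}) (P : pred 'I_n) (y : 'I_n) :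
  X \subset Dh n h -> (forall x, P x -> x %/ 2 ^ h.+1 = y %/ 2 ^ h.+1) ->
  #|[set x | part_start X x && P x]| <= 2.
Proof.
move=> sX hP.
set Q := y %/ 2 ^ h.+1.
apply: (@leq_trans #|[set x : 'I_n | val x \in [:: Q * 2 ^ h.+1; Q * 2 ^ h.+1 + 2 ^ h]]|);
  last exact: card_val_le.
apply: subset_leq_card; apply/subsetP => x; rewrite !inE => /andP [ps px].
have dx : 2 ^ h %| x.
  case/orP: ps => [/eqP -> | xX]; first exact: dvdn0.
  by move: (subsetP sX x xX); rewrite inE => /andP [].
have := hP x px; rewrite -/Q expnSr divnMA => eQ.
have ex := divnK dx.
set e := x %/ 2 ^ h in eQ ex.
set P2 := 2 ^ h in ex *.
have : e = Q * 2 \/ e = Q * 2 + 1 by lia.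
have ex' : e * P2 = val x := ex.
rewrite -ex'; case=> ->.
  by apply/orP; left; apply/eqP; nia.
by apply/orP; right; apply/eqP; nia.
Qed.


Definition Inv n (D : {set 'I_n} * {set 'I_n}) : Prop :=
  exists h, [/\ Dh n h.+1 \subset D.1, D.1 \subset Dh n h, Dh n h.+1 \subset D.2,
             D.2 \subset Dh n h & (D.1 = Dh n h.+1 \/ D.2 = Dh n h)].

Lemma inv_wide n (D : {set 'I_n} * {set 'I_n}) : Inv D -> d_wide_division (Mx n) 3 D.
Proof.
case=> h [s1 s2 s3 s4 _].
apply/andP; split; apply/forallP => i.
  apply: leq_trans (@card_le2 n h D.2 (fun j => nonconst_cell (Mx n) D.1 D.2 i j) i s4 _) _ => //.
  by move=> x /(nonconst_div s1 s3) ->.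
apply: leq_trans (@card_le2 n h D.1 (fun i0 => nonconst_cell (Mx n) D.1 D.2 i0 i) i s2 _) _ => //.
by move=> x /(nonconst_div s1 s3).
Qed.

Lemma pick_out (T : finType) (A B : {set T}) : B \subset A -> A != B -> exists2 k, k \in A & k \notin B.
Proof.
move=> sBA nAB; case: (boolP (A \subset B)) => sAB.
  by move: nAB; rewrite eqEsubset sAB sBA.
case/subsetPn: sAB => k kA kB; by exists k.
Qed.

Lemma sub_D1 (T : finType) (A B : {set T}) k : B \subset A -> k \notin B -> B \subset A :\ k.
Proof.
move=> sBA kB; apply/subsetP => x xB; rewrite !inE (subsetP sBA x xB) andbT.
by apply: contraNneq kB => <-.
Qed.

Lemma D1_sub (T : finType) (A B : {set T}) k : A \subset B -> A :\ k \subset B.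
Proof. by move=> sAB; apply: subset_trans sAB; exact: subsetDl. Qed.

Lemma Dh_pos n h (k : 'I_n) : k \in Dh n h -> 0 < k.
Proof. by rewrite inE => /andP []. Qed.

Lemma Dh_mono n h : Dh n h.+1 \subset Dh n h.
Proof.
apply/subsetP => x; rewrite !inE => /andP [-> d]; apply: dvdn_trans d.
by rewrite dvdn_exp2l.
Qed.

Lemma progress n m (D : {set 'I_n} * {set 'I_n}) : Inv D -> #|D.1| + #|D.2| = m.+1 ->
  exists D', [/\ merge_step D D', Inv D' & #|D'.1| + #|D'.2| = m].
Proof.
case: D => R C /= [h [s1 s2 s3 s4 hor]] /= hc.
case: (boolP (R == Dh n h.+1)) => [/eqP eR | nR].
  case: (boolP (C == Dh n h.+1)) => [/eqP eC | nC].
    have hpos : 0 < #|R| + #|C| by rewrite hc.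
    rewrite eR eC addnn double_gt0 card_gt0 in hpos; case/set0Pn: hpos => k0 k0in.
    have lt : 2 ^ h.+1 < n.
      move: k0in; rewrite inE => /andP [p d]; apply: leq_ltn_trans (ltn_ord k0).
      exact: dvdn_leq.
    set K := Ordinal lt.
    have KR : K \in R by rewrite eR /Dh inE /= expn_gt0 dvdnn.
    have KD : K \notin Dh n h.+2.
      rewrite /Dh inE /= expn_gt0 /=; apply/negP => /dvdn_leq; rewrite expn_gt0 => /(_ isT).
      by rewrite leq_exp2l // ltnn.
    exists (R :\ K, C); split.
    - exists K; split; first by rewrite /= expn_gt0.
      by left.
    - exists h.+1; split => /=.
      + by apply: sub_D1 => //; rewrite eR; exact: Dh_mono.
      + by apply: D1_sub; rewrite eR.
      + by rewrite eC; exact: Dh_mono.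
      + by rewrite eC.
      + by right.
    - by move: hc; rewrite (cardsD1 K R) KR /= -addnA add1n => -[].
  have [k kC kD] := pick_out s3 nC.
  have k0 : 0 < k by apply: (@Dh_pos n h); exact: (subsetP s4).
  exists (R, C :\ k); split.
  - by exists k; split => //; right.
  - exists h; split => //=.
    + exact: sub_D1.
    + exact: D1_sub.
    + by left.
  - by move: hc; rewrite (cardsD1 k C) kC /= addnCA add1n => -[].
have eC : C = Dh n h by case: hor => //= eR; rewrite eR eqxx in nR.
have [k kR kD] := pick_out s1 nR.
have k0 : 0 < k by apply: (@Dh_pos n h); exact: (subsetP s2).
exists (R :\ k, C); split.
- by exists k; split => //; left.
- exists h; split => //=.
  + exact: sub_D1.
  + exact: D1_sub.
  + by right.
- by move: hc; rewrite (cardsD1 k R) kR /= -addnA add1n => -[].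
Qed.

Lemma seq_exists n m (D0 : {set 'I_n} * {set 'I_n}) : Inv D0 -> #|D0.1| + #|D0.2| = m ->
  exists s : nat -> {set 'I_n} * {set 'I_n},
    [/\ s 0 = D0, s m = (set0, set0), (forall t, t < m -> merge_step (s t) (s t.+1))
      & (forall t, t <= m -> Inv (s t))].
Proof.
elim: m D0 => [|m IH] D0 iD cD.
  exists (fun _ => D0); split => //.
    case: D0 iD cD => R C /= _ c.
    move/eqP: c; rewrite addn_eq0 => /andP [/eqP r0 /eqP c0].
    by rewrite (cards0_eq r0) (cards0_eq c0).
have [D' [st iD' cD']] := progress iD cD.
have [s [s0 sm ss si]] := IH D' iD' cD'.
exists (fun t => if t is t'.+1 then s t' else D0); split => //.
  by case=> [|t] /=; [rewrite s0 | rewrite ltnS; exact: ss].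
by case=> [|t] //= /si.
Qed.

Lemma twin n' : twin_width_le (Mx n'.+1) 3.
Proof.
exists 1%g, 1%g.
have e : forall A B : 'M[bool]_n'.+1, A = B -> twin_ordered A 3 -> twin_ordered B 3 by move=> A B ->.
apply: (e (Mx n'.+1)); first by apply/matrixP => i j; rewrite mxE !perm1.
have ac : all_cuts n'.+1 = Dh n'.+1 0.
  by apply/setP => x; rewrite !inE expn0 dvd1n andbT.
have cac : #|all_cuts n'.+1| = n'.
  have -> : all_cuts n'.+1 = [set~ ord0].
    by apply/setP => x; rewrite !inE lt0n -val_eqE.
  by rewrite cardsC1 card_ord.
have i0 : Inv (all_cuts n'.+1, all_cuts n'.+1).
  exists 0; split => /=; rewrite ?ac ?subxx //; idtac; try exact: Dh_mono; by right.
have cm : #|(all_cuts n'.+1, all_cuts n'.+1).1| + #|(all_cuts n'.+1, all_cuts n'.+1).2| = 2 * n'.+1 - 2.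
  by rewrite /= cac; lia.
have [s [s0 sm ss si]] := seq_exists i0 cm.
exists s; split; first by split.
by move=> t /si /inv_wide.
Qed.



Lemma arith n' : 4 <= n' ->
  n'.+1 * trunc_log 2 n'.+1 <= 32 * \sum_(l < n'.+1) (2 ^ l %/ 4) * (n' %/ 2 ^ l).
Proof.
move=> n4.
set K := trunc_log 2 n'.
have hK1 : 2 ^ K <= n' by apply: trunc_logP => //; lia.
have hK2 : n' < 2 ^ K.+1 by apply: trunc_log_ltn.
have K2 : 2 <= K.
  case: (leqP 2 K) => // h; exfalso.
  have : 2 ^ K.+1 <= 2 ^ 2 by rewrite leq_exp2l.
  by move: hK2; rewrite (expnS 2 1) expn1 /=; lia.
have Kn : K < n'.+1 by rewrite ltnS; apply: leq_trans hK1; exact: ltnW (ltn_expl _ _).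
set T := trunc_log 2 n'.+1.
have hT : T <= K.+1.
  rewrite -(@leq_exp2l 2) //; apply: leq_trans (trunc_logP _ _) _ => //.
have S_lb : (K.+1 - 2) * 2 ^ (K - 2) <= \sum_(l < n'.+1) (2 ^ l %/ 4) * (n' %/ 2 ^ l).
  rewrite -(big_mkord xpredT (fun l => (2 ^ l %/ 4) * (n' %/ 2 ^ l))).
  rewrite (@big_cat_nat _ _ _ 2 0 n'.+1) //=; last by apply: leq_trans Kn; exact: ltnW.
  rewrite (@big_cat_nat _ _ _ K.+1 2 n'.+1) //=; last by apply: ltnW.
  apply: leq_trans _ (leq_addl _ _); apply: leq_trans _ (leq_addr _ _).
  rewrite -sum_nat_const_nat big_nat_cond [X in _ <= X]big_nat_cond.
  apply: leq_sum => l /andP [/andP [l2 lK] _].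
  have e1 : 2 ^ l %/ 4 = 2 ^ (l - 2).
    by rewrite -{1}(subnK l2) expnD mulnK.
  have e2 : 2 ^ (K - l) <= n' %/ 2 ^ l.
    have : 2 ^ K %/ 2 ^ l <= n' %/ 2 ^ l by apply: leq_div2r.
    by rewrite -{1}(subnK (_ : l <= K)) ?expnD ?mulnK // expn_gt0.
  rewrite e1; apply: leq_trans (leq_mul (leqnn _) e2).
  by rewrite -expnD; have -> : l - 2 + (K - l) = K - 2 by lia.
have eY : 2 ^ K = 2 ^ (K - 2) * 4 by rewrite -{1}(subnK K2) expnD.
move: S_lb hT hK2 eY K2; rewrite expnS.
set S := \sum_(l < n'.+1) _; set Y := 2 ^ (K - 2); set X := 2 ^ K.
clearbody S Y X T K => S_lb hT hK2 eY K2.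
nia.
Qed.


Lemma Mx_tr n : trmx (Mx n) = Mx n.
Proof.
apply/matrixP => i j; rewrite !mxE; congr odd.
by apply: eq_bigr => s _; rewrite eq_sym.
Qed.

Theorem theorem4 :
  exists (c N : nat), 0 < c /\
    forall n : nat, N <= n ->
      exists M : 'M[bool]_n,
        twin_width_le M 3 /\
        n * trunc_log 2 n <= c * row_coherence M /\
        n * trunc_log 2 n <= c * col_coherence M.
Proof.
exists 32, 5; split => // n n5.
case: n n5 => [|n'] // n5.
have n4 : 4 <= n' by [].
have rc : n'.+1 * trunc_log 2 n'.+1 <= 32 * row_coherence (Mx n'.+1).
  apply: leq_trans (arith n4) _; rewrite leq_mul2l /=; exact: path_lb.
exists (Mx n'.+1); split; first exact: twin.
by split => //; rewrite /col_coherence Mx_tr.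
Qed.
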